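(* Let $\mathbb K$ be an infinite field, $k\ge2$, $R=\mathbb K[x_1,\ldots,x_k]$, and let $V=V_1\cup\cdots\cup V_m\subset\mathbb P^{k-1}$ be an essential subspace arrangement with $I(V_i)$ generated by $c_i$ linearly independent linear forms. Let $\aleph=1+\sum_{i=1}^m(c_i-1)$; for each $i$ let $\Lambda_i$ be a collection of $\aleph$ distinct linear forms in $I(V_i)$ any $c_i$ of which generate $I(V_i)$; let $\Lambda=(\ell_1,\ldots,\ell_n)$ be the distinct linear forms occurring in $\Lambda_1\cup\cdots\cup\Lambda_m$, and let $a=n-\aleph+1$. Let $\mathcal C_\Lambda=\phi(\mathbb K^k)\subseteq\mathbb K^n$, where $\phi:\mathbb K^k\to\mathbb K^n$, $\phi(v)=(\ell_1(v),\ldots,\ell_n(v))$, and for each $i$ let $\mathcal D_i=\phi(\widehat V_i)$, where $\widehat V_i\subseteq\mathbb K^k$ is the linear subspace which is the common zero locus of $I(V_i)$. Then each $\mathcal D_i$ is a subcode of $\mathcal C_\Lambda$ with $|\mathrm{Supp}(\mathcal D_i)|\le a-1$, and every subcode $\mathcal D\subseteq\mathcal C_\Lambda$ with $|\mathrm{Supp}(\mathcal D)|\le a-1$ is contained in $\mathcal D_{i_0}$ for some $i_0\in\{1,\ldots,m\}$. Thus $\mathcal D_1,\ldots,\mathcal D_m$ are the maximal subcodes of $\mathcal C_\Lambda$ of support size at most $a-1$.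
   Context: A subspace arrangement $V=V_1\cup\cdots\cup V_m$ (components $V_i$ linear subspaces of $\mathbb P^{k-1}$) is essential if $I(V_1)+\cdots+I(V_m)=\langle x_1,\ldots,x_k\rangle$. Since the $\ell_i$ generate $\langle x_1,\ldots,x_k\rangle$, $\phi$ is injective and $\mathcal C_\Lambda$ is an $[n,k]$ linear code (its generating matrix has as columns the coefficient vectors of the $\ell_i$). A subcode is a $\mathbb K$-linear subspace of $\mathcal C_\Lambda$. For a subcode $\mathcal D$, $\mathrm{Supp}(\mathcal D)=\{i:\exists (y_1,\ldots,y_n)\in\mathcal D\text{ with }y_i\ne0\}$. *)

(* Defs.v *)
From HB Require Import structures.
From mathcomp Require Import all_boot all_order all_algebra.
Set Implicit Arguments. Unset Strict Implicit. Unset Printing Implicit Defensive.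
Import GRing.Theory.
Local Open Scope ring_scope.

(* Linear forms on K^k are row vectors 'rV[K]_k of coefficients;
   the value of l at v is \sum_j l_j v_j.
   Ideals generated by linear forms are represented by the row space of a
   matrix of generators; a linear form lies in such an ideal iff it lies in
   the span of the generators (degree-1 part). *)

Definition infinite_type (T : eqType) := forall s : seq T, exists x, x \notin s.

(* Essential arrangement: I(V_1)+...+I(V_m) = <x_1,...,x_k>, i.e. the linear
   forms generating the I(V_i) span all linear forms. *)
Definition essential (K : fieldType) (k m : nat) (c : 'I_m -> nat)
  (L : forall i : 'I_m, 'M[K]_(c i, k)) : Prop :=
  row_full (\sum_(i < m) <<L i>>)%MS.

(* Generator matrix of C_Lambda: column t is the coefficient vector of l_t,
   so phi(v) = v *m genmx_of l. *)
Definition code_gen (K : fieldType) (k n : nat) (l : 'I_n -> 'rV[K]_k)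
  : 'M[K]_(k, n) := \matrix_(j < k, t < n) l t 0 j.

(* Support of the subcode spanned by the rows of D : an index t is in the
   support iff some codeword has a nonzero t-th coordinate, iff some
   generating row has a nonzero t-th coordinate. *)
Definition supp (K : fieldType) (p n : nat) (D : 'M[K]_(p, n)) : {set 'I_n} :=
  [set t : 'I_n | [exists r : 'I_p, D r t != 0]].

(* D_i = phi(hat V_i), where hat V_i = {v | l(v) = 0 for all l in I(V_i)}
   = {v | v *m (L i)^T = 0} = row space of kermx (L i)^T. *)
Definition sub_code (K : fieldType) (k n c : nat) (Li : 'M[K]_(c, k))
  (l : 'I_n -> 'rV[K]_k) : 'M[K]_(k, n) :=
  kermx (Li^T) *m code_gen l.

(* Main.v *)
Require Import Defs.
From HB Require Import structures.
From mathcomp Require Import all_boot all_order all_algebra.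
From mathcomp Require Import zify.
Import GRing.Theory.
Local Open Scope ring_scope.

Lemma card_bigcup_le (I T : finType) (B : I -> {set T}) :
  (#|\bigcup_(i : I) B i| <= \sum_(i : I) #|B i|)%N.
Proof.
rewrite /index_enum; elim: (Finite.enum I) => [|i r IH].
  by rewrite !big_nil cards0.
rewrite !big_cons; apply: leq_trans (leq_card_setU _ _) _.
by rewrite leq_add2l.
Qed.

Lemma ex_subset_card (T : finType) (S : {set T}) (c : nat) :
  (c <= #|S|)%N -> exists B : {set T}, B \subset S /\ #|B| = c.
Proof.
elim: c => [|c IH] hc.
  by exists set0; rewrite sub0set cards0.
have [B [hBS hB]] := IH (ltnW hc).
have : (0 < #|S :\: B|)%N.
  by rewrite cardsD (setIidPr hBS) hB subn_gt0.
move/card_gt0P => [x]; rewrite inE => /andP [hxB hxS].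
exists (x |: B); split.
  by rewrite subUset sub1set hxS hBS.
by rewrite cardsU1 hxB hB.
Qed.

Lemma cg_entry (K : fieldType) (k n p : nat) (l : 'I_n -> 'rV[K]_k)
  (X : 'M[K]_(p, k)) r t :
  (X *m code_gen l) r t = (X *m (l t)^T) r 0.
Proof. rewrite !mxE; apply: eq_bigr => j _; rewrite !mxE; done. Qed.

Lemma ker_tr (K : fieldType) (a k p : nat) (A : 'M[K]_(a, k)) (X : 'M[K]_(p, k)) :
  (A <= kermx X^T)%MS -> X *m A^T = 0.
Proof.
move/sub_kermxP => h; apply/matrixP => r s.
transitivity ((A *m X^T) s r); last by rewrite h !mxE.
by rewrite !mxE; apply: eq_bigr => j _; rewrite !mxE mulrC.
Qed.

Theorem proposition2p3 (K : fieldType) (hK : infinite_type K) (k : nat)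
  (hk : (2 <= k)%N) (m : nat) (c : 'I_m -> nat)
  (L : forall i : 'I_m, 'M[K]_(c i, k))
  (hc : forall i, (0 < c i < k)%N)
  (hL : forall i, row_free (L i))
  (hess : essential L)
  (aleph : nat) (haleph : aleph = (1 + \sum_(i < m) (c i).-1)%N)
  (Lam : forall i : 'I_m, 'I_aleph -> 'rV[K]_k)
  (hLam_inj : forall i, injective (Lam i))
  (hLam_in : forall i j, (Lam i j <= L i)%MS)
  (hLam_gen : forall i (S : {set 'I_aleph}), #|S| = c i ->
                (\sum_(j in S) <<Lam i j>> == L i)%MS)
  (n : nat) (l : 'I_n -> 'rV[K]_k) (hl_inj : injective l)
  (hl_sub : forall t, exists i j, l t = Lam i j)
  (hl_sup : forall i j, exists t, l t = Lam i j) :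
  (forall i, (sub_code (L i) l <= code_gen l)%MS /\
             (#|supp (sub_code (L i) l)| <= (n - aleph + 1).-1)%N) /\
  (forall (p : nat) (D : 'M[K]_(p, n)),
     (D <= code_gen l)%MS -> (#|supp D| <= (n - aleph + 1).-1)%N ->
     exists i0, (D <= sub_code (L i0) l)%MS).
Proof.
have hpred : (n - aleph + 1).-1 = (n - aleph)%N by rewrite addn1.
rewrite hpred.
have [G hG] : exists G : 'I_m -> 'I_aleph -> 'I_n, forall i j, l (G i j) = Lam i j.
  apply: (@fin_all_exists _ (fun _ => 'I_aleph -> 'I_n) (fun i g => forall j, l (g j) = Lam i j)) => i.
  exact: (@fin_all_exists _ (fun _ => 'I_n) (fun j t => l t = Lam i j)).
have Ginj i : injective (G i).
  by move=> j1 j2 h; apply: (hLam_inj i); rewrite -!hG h.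
split.
  move=> i; split; first exact: submxMl.
  pose Z := [set t | [exists j, l t == Lam i j]].
  have hZ : (aleph <= #|Z|)%N.
    have -> : aleph = #|[set G i j | j in 'I_aleph]|.
      by rewrite card_imset // card_ord.
    apply: subset_leq_card.
    apply/subsetP => v /imsetP [j _ ->].
    by rewrite inE; apply/existsP; exists j; rewrite hG.
  have hsub : supp (sub_code (L i) l) \subset ~: Z.
    apply/subsetP => t; rewrite !inE => /existsP [r]; apply: contra.
    move=> /existsP [j /eqP hj]; rewrite /sub_code cg_entry hj.
    have /submxP [x ->] := hLam_in i j.
    by rewrite trmx_mul mulmxA mulmx_ker mul0mx mxE.
  have h1 := subset_leq_card hsub; have h2 := cardsC Z; rewrite card_ord in h2.
  move: h1 h2 hZ; move: #|Z| #|~: Z| => a b; lia.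
move=> p D /submxP [X ->] hsupp.
have m_gt0 : (0 < m)%N.
  rewrite lt0n; apply/negP => /eqP m0.
  have nI : forall i : 'I_m, False by case=> i; rewrite m0.
  move: hess; rewrite /essential big1; last by move=> i; case: (nI i).
  rewrite /row_full mxrank0 => /eqP hk0.
  by move: hk; rewrite -hk0.
pose i0 : 'I_m := Ordinal m_gt0.
have hn : (aleph <= n)%N.
  by have := leq_card _ (Ginj i0); rewrite !card_ord.
pose Z := ~: supp (X *m code_gen l).
have hZ : (aleph <= #|Z|)%N.
  have h := cardsC (supp (X *m code_gen l)); rewrite card_ord in h.
  rewrite /Z; move: hsupp h hn.
  move: #|supp (X *m code_gen l)| #|~: supp (X *m code_gen l)| => a b; lia.
pose S i := [set j : 'I_aleph | [exists t in Z, l t == Lam i j]].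
have [i hi] : exists i, (c i <= #|S i|)%N.
  have [/existsP //|] := boolP [exists i, (c i <= #|S i|)%N].
  rewrite negb_exists => /forallP hall; exfalso.
  pose T i := [set t in Z | [exists j, l t == Lam i j]].
  have hZT : Z \subset \bigcup_i T i.
    apply/subsetP => t tZ; have [i [j hj]] := hl_sub t.
    apply/bigcupP; exists i => //; rewrite inE tZ /=.
    by apply/existsP; exists j; rewrite hj.
  have hT i : (#|T i| <= (c i).-1)%N.
    have := hall i; rewrite -ltnNge => hlt.
    have : (#|T i| <= #|S i|)%N.
      apply: leq_trans (leq_imset_card (G i) (S i)).
      apply: subset_leq_card; apply/subsetP => t.
      rewrite inE => /andP [tZ /existsP [j /eqP hj]].
      have -> : t = G i j by apply: hl_inj; rewrite hG.
      apply/imsetP; exists j => //; rewrite inE; apply/existsP; exists t.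
      by rewrite tZ hj eqxx.
    move=> h; have := hc i; move=> /andP [hc0 _]; lia.
  have h := leq_trans (subset_leq_card hZT) (@card_bigcup_le _ _ T).
  have h3 : (\sum_(i < m) #|T i| <= \sum_(i < m) (c i).-1)%N.
    by apply: leq_sum => i _; exact: hT.
  have h2 := leq_trans h h3.
  move: hZ h2; rewrite haleph; move: (\sum_(i < m) (c i).-1)%N #|Z| => s z; lia.
have [B [hBS hB]] := @ex_subset_card _ _ _ hi.
exists i; apply: submxMr; apply/sub_kermxP.
apply: ker_tr.
have := hLam_gen i B hB => /andP [_ hLsub].
apply: submx_trans hLsub _.
apply/sumsmx_subP => j jB; rewrite genmxE; apply/sub_kermxP.
have := subsetP hBS j jB; rewrite inE => /existsP [t /andP [tZ /eqP ht]].
rewrite -ht; apply/rowP => r; rewrite [RHS]mxE.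
have H : (X *m code_gen l) r t = 0.
  move: tZ; rewrite inE inE negb_exists => /forallP /(_ r); rewrite negbK => /eqP.
  done.
transitivity ((X *m (l t)^T) r 0); last by rewrite -cg_entry.
by rewrite !mxE; apply: eq_bigr => q _; rewrite !mxE mulrC.
Qed.
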